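(* Let $\alpha,\beta,\gamma,\kappa>0$ with $\mu:=\gamma-\alpha\beta>0$, and let $\lambda>0$. For $\eta\in\mathbb R$ define the polynomial $$p_\eta(z)=z^4+(\alpha+\kappa\lambda)z^3+(\beta\lambda+\alpha\kappa\lambda+\eta^2\lambda^2)z^2+(\gamma\lambda+\beta\kappa\lambda^2+\alpha\eta^2\lambda^2)z+\gamma\kappa\lambda^2.$$ Then for every $\eta\in\mathbb R$ with $|\eta|$ small enough, $p_\eta$ possesses a complex root $z_\eta$ with $\operatorname{Re} z_\eta>0$.
   Context: $p_\eta$ is the characteristic polynomial of the ODE system $\phi'''+\alpha\phi''+\beta\lambda\phi'+\gamma\lambda\phi-\eta\lambda\psi=0$, $\psi'+\kappa\lambda\psi+\eta\lambda\phi''+\alpha\eta\lambda\phi'=0$, obtained from single-mode solutions $u=\phi(t)w$, $\theta=\psi(t)w$ of the coupled MGT–Fourier system when $Aw=\lambda w$. *)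

(* Defs.v *)
From mathcomp Require Import all_boot all_order all_algebra.
From mathcomp Require Import reals.
From mathcomp.real_closed Require Import complex.
Set Implicit Arguments. Unset Strict Implicit. Unset Printing Implicit Defensive.
Import Order.TTheory GRing.Theory Num.Theory.
Local Open Scope ring_scope.
Local Open Scope complex_scope.

Definition p_eta (R : realType) (alpha beta gamma kappa lambda eta : R)
  : {poly R[i]} :=
  'X^4
  + ((alpha + kappa * lambda)%:C)%:P * 'X^3
  + ((beta * lambda + alpha * kappa * lambda + eta ^+ 2 * lambda ^+ 2)%:C)%:P
      * 'X^2
  + ((gamma * lambda + beta * kappa * lambda ^+ 2
      + alpha * eta ^+ 2 * lambda ^+ 2)%:C)%:P * 'X
  + ((gamma * kappa * lambda ^+ 2)%:C)%:P.

(* Main.v *)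
Require Import Defs.
From mathcomp Require Import all_boot all_order all_algebra.
From mathcomp Require Import reals.
From mathcomp.real_closed Require Import complex.
From mathcomp Require Import ring lra.
Import Order.TTheory GRing.Theory Num.Theory.
Local Open Scope ring_scope.
Section Helpers.
Local Open Scope complex_scope.
Lemma cplx_eq (R : realType) (a b c d : R) : a = c -> b = d -> a +i* b = c +i* d.
Proof. by move=> -> ->. Qed.

Lemma quad_root (R : realType) (r s : R) : r < 0 \/ s < 0 ->
  exists w : R[i], w^+2 + r%:C * w + s%:C = 0 /\ 0 < complex.Re w.
Proof.
move=> hrs.
have [hd|hd] := lerP 0 (r^+2 - 4 * s).
- pose t : R := Num.sqrt (r^+2 - 4 * s).
  have ht : t^+2 = r^+2 - 4 * s by rewrite sqr_sqrtr.
  have ht0 : 0 <= t by rewrite sqrtr_ge0.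
  exists (((- r + t) / 2) +i* 0); split.
  + apply: cplx_eq; last first. lra. rewrite expr2 in ht. nra.
  + rewrite /=. rewrite expr2 in ht.
    have : r < t.
      rewrite ltNge; apply/negP => h.
      case: hrs => h'; nra.
    lra.
- have hd' : 0 <= - (r^+2 - 4 * s) by lra.
  pose t : R := Num.sqrt (- (r^+2 - 4 * s)).
  have ht : t^+2 = - (r^+2 - 4 * s) by rewrite sqr_sqrtr.
  have hr : r < 0.
    case: hrs => // h. nra.
  exists ((- r / 2) +i* (t / 2)); split.
  + apply: cplx_eq; last first. lra. rewrite expr2 in ht. nra.
  + rewrite /=. lra.
Qed.
Lemma factor4 (R : realType) (a1 a2 a3 a4 : R) : exists u v r s : R,
  a1 = u + r /\ a2 = v + s + u*r /\ a3 = u*s + v*r /\ a4 = v*s.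
Proof.
have [z hz] := @solve_monicpoly (R[i]) 4 (fun i => - (nth 0 [:: a4; a3; a2; a1] i)%:C) isT.
rewrite !big_ord_recr big_ord0 /= in hz.
case: z hz => x y hz.
have E1 := congr1 (@complex.Re R) hz.
have E2 := congr1 (@complex.Im R) hz.
simpl in E1, E2.
have [y0|hy] := eqVneq y 0.
  subst y.
  pose b1 := a1 + x. pose b2 := a2 + x * b1. pose b3 := a3 + x * b2.
  have hb4 : a4 = - x * b3 by rewrite /b3 /b2 /b1; lra.
  have [z hz2] := @solve_monicpoly (R[i]) 3 (fun i => - (nth 0 [:: b3; b2; b1] i)%:C) isT.
  rewrite !big_ord_recr big_ord0 /= in hz2.
  case: z hz2 => x2 y2 hz2.
  have F1 := congr1 (@complex.Re R) hz2.
  have F2 := congr1 (@complex.Im R) hz2.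
  simpl in F1, F2.
  have [y20|hy2] := eqVneq y2 0.
    subst y2.
    pose c1 := b1 + x2. pose c2 := b2 + x2 * c1.
    have hb3 : b3 = - x2 * c2 by rewrite /c2 /c1; lra.
    exists (-(x + x2)), (x * x2), c1, c2.
    split; first by rewrite /c1 /b1; ring.
    split; first by rewrite /c2 /c1 /b2 /b1; ring.
    split.
      have e3 : a3 = b3 - x * b2 by rewrite /b3; ring.
      rewrite e3 hb3 /c2; ring.
    rewrite hb4 hb3; ring.
  pose u := -2 * x2. pose v := x2*x2 + y2*y2. pose t := b1 - u.
  have hA : (b2 - v - u*t) * y2 = 0 by rewrite /t /v /u; lra.
  have hA0 : b2 - v - u*t = 0.
    by move/eqP: hA; rewrite mulf_eq0 (negbTE hy2) orbF => /eqP.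
  have hB : b3 - v*t = 0.
    move: hA0; rewrite /t /v /u => hA0; nra.
  exists u, v, (t - x), (- x * t).
  have e2 : a2 = b2 - x * b1 by rewrite /b2; ring.
  have e3 : a3 = b3 - x * b2 by rewrite /b3; ring.
  have hb2' : b2 = v + u * t by lra.
  have hb3' : b3 = v * t by lra.
  split; first by rewrite /t /b1; ring.
  split; first by rewrite e2 hb2' /t; ring.
  split; first by rewrite e3 hb3' hb2'; ring.
  by rewrite hb4 hb3'; ring.
pose u := -2 * x. pose v := x*x + y*y. pose r := a1 - u. pose s := a2 - v - u*r.
have hA : (a3 - (u*s + v*r)) * y = 0 by rewrite /s /r /v /u; lra.
have hA0 : a3 - (u*s + v*r) = 0.
  by move/eqP: hA; rewrite mulf_eq0 (negbTE hy) orbF => /eqP.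
have hB : a4 - v*s = 0.
  move: hA0; rewrite /s /r /v /u => hA0; nra.
exists u, v, r, s; split; first by rewrite /r; ring.
split; first by rewrite /s; ring.
split; lra.
Qed.

Definition delta3 {R : realType} (a1 a2 a3 a4 : R) := a1*a2*a3 - a3^+2 - a1^+2*a4.

Lemma peval (R : realType) (alpha beta gamma kappa lambda eta u v r s : R) :
  alpha + kappa * lambda = u + r ->
  beta * lambda + alpha * kappa * lambda + eta ^+ 2 * lambda ^+ 2 = v + s + u*r ->
  gamma * lambda + beta * kappa * lambda ^+ 2 + alpha * eta ^+ 2 * lambda ^+ 2 = u*s + v*r ->
  gamma * kappa * lambda ^+ 2 = v*s ->
  forall w : R[i], (p_eta alpha beta gamma kappa lambda eta).[w] =
    (w^+2 + u%:C*w + v%:C) * (w^+2 + r%:C*w + s%:C).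
Proof.
move=> h1 h2 h3 h4 w.
rewrite /p_eta h1 h2 h3 h4 !hornerE !rmorphD !rmorphM /=.
ring.
Qed.

Lemma delta_small (R : realType) (alpha beta gamma kappa lambda : R) :
  0 < alpha -> 0 < beta -> 0 < gamma -> 0 < kappa ->
  0 < gamma - alpha * beta -> 0 < lambda ->
  exists delta : R, 0 < delta /\
    forall eta : R, `|eta| < delta ->
     delta3 (alpha + kappa * lambda)
       (beta * lambda + alpha * kappa * lambda + eta ^+ 2 * lambda ^+ 2)
       (gamma * lambda + beta * kappa * lambda ^+ 2 + alpha * eta ^+ 2 * lambda ^+ 2)
       (gamma * kappa * lambda ^+ 2) < 0.
Proof.
move=> ha hb hg hk hmu hl.
pose c := kappa * lambda.
pose D0 := - (lambda * (gamma - alpha * beta)) * (c^+3 + alpha * c^+2 + beta * lambda * c + gamma * lambda).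
pose A := alpha + c. pose B := beta * lambda + alpha * c. pose G := gamma * lambda + beta * kappa * lambda ^+ 2.
pose L := lambda ^+ 2.
pose D1 := A * L * (alpha * B + G) - 2 * alpha * G * L.
pose D2 := alpha * L ^+ 2 * c.
have hD : forall e, delta3 (alpha + kappa * lambda)
       (beta * lambda + alpha * kappa * lambda + e * lambda ^+ 2)
       (gamma * lambda + beta * kappa * lambda ^+ 2 + alpha * e * lambda ^+ 2)
       (gamma * kappa * lambda ^+ 2) = D0 + D1 * e + D2 * e^+2.
  move=> e; rewrite /delta3 /D0 /D1 /D2 /A /B /G /L /c; ring.
have hc : 0 < c by rewrite /c mulr_gt0.
have hD0 : D0 < 0.
  rewrite /D0 mulNr oppr_lt0; apply: mulr_gt0; first exact: mulr_gt0.
  apply: addr_gt0; last exact: mulr_gt0.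
  apply: addr_gt0; last by apply: mulr_gt0 => //; apply: mulr_gt0.
  apply: addr_gt0; first exact: exprn_gt0.
  by apply: mulr_gt0 => //; apply: exprn_gt0.
have hD2 : 0 <= D2.
  rewrite /D2; apply: mulr_ge0; last exact: ltW.
  by apply: mulr_ge0; [exact: ltW | exact: sqr_ge0].
pose M := `|D1| + D2 + 1.
have hM : 0 < M by rewrite /M; have := normr_ge0 D1; lra.
pose eps := - D0 / M.
have heps : 0 < eps by rewrite /eps divr_gt0 // oppr_gt0.
exists (Num.min 1 eps); split; first by rewrite lt_min ltr01 heps.
move=> eta; rewrite lt_min => /andP [he1 he2].
rewrite hD.
pose e := eta ^+ 2.
have he0 : 0 <= e by rewrite /e sqr_ge0.
have hee : e <= `|eta|.
  have -> : e = `|eta| * `|eta| by rewrite /e -expr2 real_normK ?num_real.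
  by apply: ler_piMl => //; exact: ltW.
have heM : e * M < - D0.
  rewrite -ltr_pdivlMr //. apply: le_lt_trans hee he2.
have h1 : D1 * e <= `|D1| * e by apply: ler_wpM2r => //; exact: ler_norm.
have h2 : D2 * e^+2 <= D2 * e.
  apply: ler_wpM2l => //. rewrite expr2; apply: ler_piMl => //. 
  apply: le_trans hee _; exact: ltW.
rewrite -/e. 
have : e * M = `|D1| * e + D2 * e + e by rewrite /M; ring.
lra.
Qed.

End Helpers.

Theorem proposition5p1 (R : realType) (alpha beta gamma kappa lambda : R) :
  0 < alpha -> 0 < beta -> 0 < gamma -> 0 < kappa ->
  0 < gamma - alpha * beta -> 0 < lambda ->
  exists delta : R, 0 < delta /\
    forall eta : R, `|eta| < delta ->
      exists z : R[i], root (p_eta alpha beta gamma kappa lambda eta) z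
                       /\ 0 < complex.Re z.
Proof.
move=> ha hb hg hk hmu hl.
have [delta [hd hD]] := @delta_small R alpha beta gamma kappa lambda ha hb hg hk hmu hl.
exists delta; split => // eta heta.
have hneg := hD eta heta.
have [u [v [r [s [h1 [h2 [h3 h4]]]]]]] := @factor4 R
  (alpha + kappa * lambda)
  (beta * lambda + alpha * kappa * lambda + eta ^+ 2 * lambda ^+ 2)
  (gamma * lambda + beta * kappa * lambda ^+ 2 + alpha * eta ^+ 2 * lambda ^+ 2)
  (gamma * kappa * lambda ^+ 2).
have hp := @peval R _ _ _ _ _ _ _ _ _ _ h1 h2 h3 h4.
case: (boolP ((u < 0) || (v < 0))) => [/orP huv|].
  have [w [hw hre]] := @quad_root R u v ltac:(by case: huv; [left|right]).
  exists w; split => //.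
  by rewrite /root hp hw mul0r.
rewrite negb_or -!leNgt => /andP [hu hv].
case: (boolP ((r < 0) || (s < 0))) => [/orP hrs|].
  have [w [hw hre]] := @quad_root R r s ltac:(by case: hrs; [left|right]).
  exists w; split => //.
  by rewrite /root hp hw mulr0.
rewrite negb_or -!leNgt => /andP [hr hs].
exfalso.
move: hneg; rewrite /delta3 h1 h2 h3 h4.
have -> : (u + r) * (v + s + u * r) * (u * s + v * r) - (u * s + v * r) ^+ 2 -
   (u + r) ^+ 2 * (v * s) = u * r * ((v - s) ^+ 2 + (u + r) * (u * s + v * r)) by ring.
apply/negP; rewrite -leNgt.
apply: mulr_ge0; first exact: mulr_ge0.
apply: addr_ge0; first exact: sqr_ge0.
apply: mulr_ge0; first exact: addr_ge0.
by apply: addr_ge0; apply: mulr_ge0.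
Qed.
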